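(* Consider an agent with $b$ neighbors in the networked adversarial $K$-armed bandit setting described in the context, whose neighbors play arbitrarily subject to $q^i_j(t)\ge \varepsilon_i/K$ for all neighbors $i$, arms $j$ and times $t$, where $\varepsilon_i\in(0,1]$. Let $$\Theta=\prod_{i=1}^b\left(1-\frac{\varepsilon_i}{K}\right),\qquad \beta=\frac{1}{1-\left(1-\frac1K\right)\Theta}+1.$$ Then for an appropriate choice of the parameters $\eta\in[0,1]$ and $\delta>0$ (depending on $\Theta$, as well as $K$ and $T$), the regret of the agent using the fixed-parameter $\mathrm{EXPN}$ algorithm satisfies $R\in O\left(\sqrt{\beta T\ln K}\right)$.
   Context: Adversarial networked bandit setting: there are $K$ arms and a horizon $T$. At each time $t$ an adversary fixes a reward vector $g(t)\in[0,1]^K$, the same for all agents. The agent has $b$ neighbors; at time $t$ neighbor $i$ selects an arm drawn from a probability distribution $q^i(t)=(q^i_1(t),\dots,q^i_K(t))$ chosen arbitrarily, each agent drawing independently. The agent selects arm $a(t)$ drawn from her distribution $p(t)$, and observes her own reward, the actions and rewards of her neighbors, and their distributions. Define $p'_j(t)=1-(1-p_j(t))\prod_{i=1}^b(1-q^i_j(t))$ and the estimator $\hat g_j(t)=g_j(t)/p'_j(t)$ if some individual among the agent and her neighbors selects arm $j$ at time $t$, and $0$ otherwise. Fixed-parameter $\mathrm{EXPN}$ with exploration parameter $\eta\in[0,1]$ and update parameter $\delta>0$: weights $w_j(1)=1$, $w_j(t+1)=w_j(t)e^{\delta\hat g_j(t)}$, $W_t=\sum_j w_j(t)$, and $p_j(t)=(1-\eta)\frac{w_j(t)}{W_t}+\frac{\eta}{K}$.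 Regret: $R=\mathbb E\left[\sum_t g_{j^\star}(t)-\sum_t g_{a(t)}(t)\right]$ with $j^\star=\arg\max_j\mathbb E[\sum_t g_j(t)]$, expectation over the randomness of the algorithms. *)

(* Defs.v *)
From HB Require Import structures.
From mathcomp Require Import all_boot all_order all_algebra.
From mathcomp.reals Require Import reals.
From mathcomp.analysis Require Import sequences exp.

Set Implicit Arguments.
Unset Strict Implicit.
Unset Printing Implicit Defensive.

Import Order.TTheory GRing.Theory Num.Theory.
Local Open Scope ring_scope.

Section NetworkedBandit.
Variable R : realType.
Variables (K b : nat).

(* Joint outcome at one time step: the agent's arm and the arms of her b
   neighbors. *)
Definition outcome := ('I_K * {ffun 'I_b -> 'I_K})%type.

(* Time steps are numbered 0, ..., T-1; the history before time t is the
   sequence of the t previous joint outcomes (all observed by the agent). *)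

Definition selected (o : outcome) (j : 'I_K) : bool :=
  (o.1 == j) || [exists i : 'I_b, o.2 i == j].

Definition expn_dist (eta : R) (w : 'I_K -> R) (j : 'I_K) : R :=
  (1 - eta) * (w j / \sum_(k < K) w k) + eta / K%:R.

Definition pprime (p : 'I_K -> R) (qs : 'I_b -> 'I_K -> R) (j : 'I_K) : R :=
  1 - (1 - p j) * \prod_(i < b) (1 - qs i j).

Definition ghat (gt : 'I_K -> R) (p : 'I_K -> R) (qs : 'I_b -> 'I_K -> R)
    (o : outcome) (j : 'I_K) : R :=
  if selected o j then gt j / pprime p qs j else 0.

Variables (eta delta : R).
Variable g : nat -> 'I_K -> R.
Variable q : seq outcome -> 'I_b -> 'I_K -> R.

Fixpoint expn_weights_aux (pre : seq outcome) (w : 'I_K -> R)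
    (h : seq outcome) : 'I_K -> R :=
  match h with
  | [::] => w
  | o :: h' =>
      let p := expn_dist eta w in
      expn_weights_aux (rcons pre o)
        (fun j => w j * expR (delta * ghat (g (size pre)) p (q pre) o j)) h'
  end.

Definition expn_weights (h : seq outcome) : 'I_K -> R :=
  expn_weights_aux [::] (fun _ => 1) h.

Definition expn_p (h : seq outcome) : 'I_K -> R :=
  expn_dist eta (expn_weights h).

Fixpoint hist_prob_aux (pre : seq outcome) (h : seq outcome) : R :=
  match h with
  | [::] => 1
  | o :: h' =>
      (expn_p pre o.1 * \prod_(i < b) q pre i (o.2 i))
        * hist_prob_aux (rcons pre o) h'
  end.

Definition hist_prob (h : seq outcome) : R := hist_prob_aux [::] h.

Definition expected_reward (T : nat) : R :=
  \sum_(h : T.-tuple outcome)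
    hist_prob h * \sum_(t < T) g t (tnth h t).1.

Definition regret (T : nat) (jstar : 'I_K) : R :=
  \sum_(t < T) g t jstar - expected_reward T.

End NetworkedBandit.

Definition Theta_of (R : realType) (K b : nat) (eps : 'I_b -> R) : R :=
  \prod_(i < b) (1 - eps i / K%:R).

Definition beta_of (R : realType) (K : nat) (Theta : R) : R :=
  (1 - (1 - K%:R^-1) * Theta)^-1 + 1.

(* Main.v *)
Require Import Defs.
From HB Require Import structures.
From mathcomp Require Import all_boot all_order all_algebra.
From mathcomp.reals Require Import reals.
From mathcomp.analysis Require Import sequences exp.
From mathcomp Require Import ring lra zify.
Import Order.TTheory GRing.Theory Num.Theory.
Local Open Scope ring_scope.

Set Implicit Arguments.
Unset Strict Implicit.
Unset Printing Implicit Defensive.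

Lemma tangent (R : realType) (a Th p u : R) : 0 <= a -> 0 <= Th ->
  0 < a + Th * p -> 0 < a + Th * u ->
  p / (a + Th * p) <= u / (a + Th * u) + a * (p - u) / (a + Th * u) ^+ 2.
Proof.
move=> a0 t0 D0 Du0.
rewrite -subr_ge0.
have -> : u / (a + Th * u) + a * (p - u) / (a + Th * u) ^+ 2 - p / (a + Th * p)
  = a * Th * (p - u) ^+ 2 / ((a + Th * u) ^+ 2 * (a + Th * p)).
  by field; apply/andP; split; apply: lt0r_neq0.
apply: divr_ge0; first by apply: mulr_ge0; [exact: mulr_ge0|exact: sqr_ge0].
by apply: mulr_ge0; [exact: sqr_ge0| exact: ltW].
Qed.

Lemma sum_ratio (R : realType) (K : nat) (p : 'I_K -> R) (Th : R) : (0 < K)%N ->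
  0 <= Th <= 1 -> (forall j, 0 <= p j) -> \sum_(j < K) p j = 1 ->
  (forall j, 0 < 1 - Th + Th * p j) ->
  \sum_(j < K) p j / (1 - Th + Th * p j) <= (1 - (1 - K%:R^-1) * Th)^-1.
Proof.
move=> HK /andP [t0 t1] p0 p1 D0.
set u := K%:R^-1 : R.
have Kp : 0 < K%:R :> R by rewrite ltr0n.
have u0 : 0 < u by rewrite invr_gt0.
have Ku : K%:R * u = 1 by rewrite divff // gt_eqF.
have u1 : u <= 1.
  by rewrite /u invr_le1 // ?unitfE ?gt_eqF // ler1n.
have Du : 1 - (1 - u) * Th = 1 - Th + Th * u by ring.
have Du0 : 0 < 1 - Th + Th * u.
  rewrite -Du subr_gt0; apply: (@le_lt_trans _ _ (1 - u)); last by lra.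
  by rewrite -[X in _ <= X]mulr1; apply: ler_wpM2l => //; lra.
rewrite Du.
have a0 : 0 <= 1 - Th by lra.
apply: le_trans (ler_sum _ (fun j _ => @tangent R (1 - Th) Th (p j) u a0 t0 (D0 j) Du0)) _.
set D := 1 - Th + Th * u.
rewrite big_split /= sumr_const card_ord.
rewrite (eq_bigr (fun i => (1 - Th) / D ^+ 2 * (p i - u))); last by move=> i _; rewrite mulrAC.
rewrite -mulr_sumr sumrB p1 sumr_const card_ord -[u *+ K]mulr_natl Ku subrr mulr0 addr0 -[u / D *+ K]mulr_natl mulrA Ku mul1r.
by [].
Qed.

Section Ex.
Variable R : realType.
Variables (K b : nat).
Variables (eta delta : R).
Variable g : nat -> 'I_K -> R.
Variable q : seq (outcome K b) -> 'I_b -> 'I_K -> R.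

Definition sp (pre : seq (outcome K b)) (o : outcome K b) : R :=
  expn_p eta delta g q pre o.1 * \prod_(i < b) q pre i (o.2 i).

Fixpoint Ex (n : nat) (pre : seq (outcome K b)) (F : seq (outcome K b) -> R) : R :=
  match n with
  | 0 => F pre
  | n'.+1 => \sum_(o : outcome K b) sp pre o * Ex n' (rcons pre o) F
  end.

Lemma tuple_sum_Ex n pre (F : seq (outcome K b) -> R) :
  \sum_(h : n.-tuple (outcome K b)) hist_prob_aux eta delta g q pre h * F (pre ++ h)
  = Ex n pre F.
Proof.
elim: n pre F => [|n IH] pre F /=.
  rewrite (big_pred1 [tuple]) /=; last by move=> h; apply/esym/eqP; exact: tuple0.
  by rewrite mul1r cats0.
rewrite (reindex (fun p : outcome K b * n.-tuple (outcome K b) => [tuple of p.1 :: p.2])) /=; last first.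
  exists (fun h => (thead h, [tuple of behead h])) => [[o h]|h] _ /=.
    by congr (_, _); apply: val_inj.
  by rewrite [in RHS](tuple_eta h).
rewrite -(pair_big xpredT xpredT (fun o (h : n.-tuple (outcome K b)) =>
   hist_prob_aux eta delta g q pre (o :: h) * F (pre ++ o :: h))) /=.
apply: eq_bigr => o _.
rewrite -IH big_distrr /=; apply: eq_bigr => h _.
by rewrite cat_rcons mulrA.
Qed.


Hypothesis HK : (0 < K)%N.
Hypothesis Heta : 0 <= eta <= 1.
Hypothesis Hq0 : forall h i j, 0 <= q h i j.
Hypothesis Hq1 : forall h i, \sum_(j < K) q h i j = 1.

Lemma weights_aux_gt0 pre w h j : (forall j, 0 < w j) ->
  0 < expn_weights_aux eta delta g q pre w h j.
Proof.
elim: h pre w => [|o h IH] pre w Hw //=.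
by apply: IH => k; rewrite mulr_gt0 // expR_gt0.
Qed.

Lemma weights_gt0 h j : 0 < expn_weights eta delta g q h j.
Proof. exact: weights_aux_gt0. Qed.

Lemma sumw_gt0 h : 0 < \sum_(j < K) expn_weights eta delta g q h j.
Proof.
rewrite (bigD1 (Ordinal HK)) //= ltr_wpDr ?weights_gt0 //.
by apply: sumr_ge0 => j _; apply/ltW/weights_gt0.
Qed.

Lemma Kpos : 0 < K%:R :> R.
Proof. by rewrite ltr0n. Qed.

Lemma p_ge h j : eta / K%:R <= expn_p eta delta g q h j.
Proof.
have [e0 e1] := andP Heta.
rewrite /expn_p /expn_dist lerDr; apply: mulr_ge0; first by rewrite subr_ge0.
by apply: divr_ge0; apply/ltW; [apply: weights_gt0|apply: sumw_gt0].
Qed.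

Lemma p_ge0 h j : 0 <= expn_p eta delta g q h j.
Proof.
apply: le_trans (p_ge h j); have [e0 _] := andP Heta; apply: divr_ge0 => //; exact/ltW/Kpos.
Qed.

Lemma p_sum1 h : \sum_(j < K) expn_p eta delta g q h j = 1.
Proof.
rewrite /expn_p /expn_dist big_split /= -big_distrr /= -mulr_suml.
rewrite divff ?gt_eqF ?sumw_gt0 // sumr_const card_ord.
by rewrite -[_ *+ K]mulr_natr divfK ?gt_eqF ?Kpos // mulr1 subrK.
Qed.

Lemma p_le1 h j : expn_p eta delta g q h j <= 1.
Proof.
rewrite -(p_sum1 h) (bigD1 j) //= lerDl; apply: sumr_ge0 => k _; exact: p_ge0.
Qed.

Lemma q_le1 h i j : q h i j <= 1.
Proof.
rewrite -(Hq1 h i) (bigD1 j) //= lerDl; apply: sumr_ge0 => k _; exact: Hq0.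
Qed.

Lemma sp_ge0 pre o : 0 <= sp pre o.
Proof. rewrite /sp; apply: mulr_ge0; first exact: p_ge0. by apply: prodr_ge0 => i _; exact: Hq0. Qed.

Lemma sum_ffun (F : 'I_b -> 'I_K -> R) :
  \sum_(f : {ffun 'I_b -> 'I_K}) \prod_(i < b) F i (f i) = \prod_(i < b) \sum_(j < K) F i j.
Proof. by rewrite bigA_distr_bigA. Qed.

Lemma sp_marg pre (f : 'I_K -> R) :
  \sum_(o : outcome K b) sp pre o * f o.1 = \sum_(a < K) expn_p eta delta g q pre a * f a.
Proof.
rewrite /sp -(pair_big xpredT xpredT (fun a (ff : {ffun 'I_b -> 'I_K}) =>
  expn_p eta delta g q pre (a, ff).1 * \prod_(i < b) q pre i ((a, ff).2 i) * f (a, ff).1)) /=.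
apply: eq_bigr => a _.
rewrite -big_distrl -big_distrr /= sum_ffun big1 ?mulr1 // => i _; exact: Hq1.
Qed.

Lemma sp_sum1 pre : \sum_(o : outcome K b) sp pre o = 1.
Proof.
have := sp_marg pre (fun _ => 1).
under eq_bigr do rewrite mulr1.
by move=> ->; under eq_bigr do rewrite mulr1; rewrite p_sum1.
Qed.


Lemma Ex_cst n pre c : Ex n pre (fun _ => c) = c.
Proof.
elim: n pre => [|n IH] pre //=.
under eq_bigr do rewrite IH.
by rewrite -big_distrl /= sp_sum1 mul1r.
Qed.

Lemma ExD n pre F G : Ex n pre (fun H => F H + G H) = Ex n pre F + Ex n pre G.
Proof.
elim: n pre => [|n IH] pre //=.
under eq_bigr do rewrite IH mulrDr.
by rewrite big_split.
Qed.

Lemma ExZ n pre F x : Ex n pre (fun H => x * F H) = x * Ex n pre F.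
Proof.
elim: n pre => [|n IH] pre //=.
under eq_bigr do rewrite IH mulrCA.
by rewrite big_distrr.
Qed.

Lemma Ex_le n pre F G : (forall H, size H = (size pre + n)%N -> F H <= G H) ->
  Ex n pre F <= Ex n pre G.
Proof.
elim: n pre => [|n IH] pre HFG /=; first by apply: HFG; rewrite addn0.
apply: ler_sum => o _; apply: ler_wpM2l; first exact: sp_ge0.
by apply: IH => H; rewrite size_rcons addSnnS; apply: HFG.
Qed.

Lemma Ex_ext n pre F G : (forall H, size H = (size pre + n)%N -> F H = G H) ->
  Ex n pre F = Ex n pre G.
Proof.
move=> HFG; apply/le_anti/andP; split; apply: Ex_le => H HH; rewrite HFG //.
Qed.

Fixpoint AccAux (phi : seq (outcome K b) -> outcome K b -> R) pre h : R :=
  match h with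
  | [::] => 0
  | o :: h' => phi pre o + AccAux phi (rcons pre o) h'
  end.

Definition Acc phi H := AccAux phi [::] H.

Lemma AccAux_rcons phi pre h o :
  AccAux phi pre (rcons h o) = AccAux phi pre h + phi (pre ++ h) o.
Proof.
elim: h pre => [|o' h IH] pre /=; first by rewrite cats0 addr0 add0r.
by rewrite IH cat_rcons addrA.
Qed.

Lemma Acc_rcons phi H o : Acc phi (rcons H o) = Acc phi H + phi H o.
Proof. by rewrite /Acc AccAux_rcons. Qed.

Definition CE phi H := \sum_(o : outcome K b) sp H o * phi H o.

Lemma Ex_Acc phi n pre :
  Ex n pre (Acc phi) = Acc phi pre + \sum_(k < n) Ex k pre (CE phi).
Proof.
elim: n pre => [|n IH] pre /=; first by rewrite big_ord0 addr0.
rewrite (eq_bigr (fun o => sp pre o * (Acc phi (rcons pre o) + \sum_(k<n) Ex k (rcons pre o) (CE phi)))); last by move=> o _; rewrite IH.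
under eq_bigr do rewrite Acc_rcons mulrDr.
rewrite big_split /= big_ord_recl /=.
under eq_bigr do rewrite mulrDr.
rewrite big_split /= -big_distrl /= sp_sum1 mul1r -addrA; congr (_ + _).
rewrite /CE; congr (_ + _).
rewrite exchange_big /=; apply: eq_bigr => k _.
by rewrite big_distrr.
Qed.

Lemma sum_neq (F : 'I_K -> R) j :
  \sum_(a < K) F a * (a != j)%:R = \sum_(a < K) F a - F j.
Proof.
rewrite [in RHS](bigD1 j) //= [F j + _]addrC addrK (bigD1 j) //= eqxx mulr0 add0r.
by apply: eq_bigr => a ->; rewrite mulr1.
Qed.

Lemma prod_ind (F : 'I_b -> R) (P : pred 'I_b) :
  \prod_(i < b) (F i * (P i)%:R) = \prod_(i < b) F i * [forall i, P i]%:R.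
Proof.
rewrite big_split /=; congr (_ * _).
case: (boolP [forall i, P i]) => H.
  by apply: big1 => i _; rewrite (forallP H).
move: H; rewrite negb_forall => /existsP [i Hi].
by rewrite (bigD1 i) //= (negbTE Hi) mul0r.
Qed.

Lemma nsel_sum pre j :
  \sum_(o : outcome K b) sp pre o * ((o.1 != j) && [forall i, o.2 i != j])%:R
  = (1 - expn_p eta delta g q pre j) * \prod_(i < b) (1 - q pre i j).
Proof.
rewrite /sp -(pair_big xpredT xpredT (fun a (ff : {ffun 'I_b -> 'I_K}) =>
  expn_p eta delta g q pre (a, ff).1 * \prod_(i < b) q pre i ((a, ff).2 i) *
  (((a, ff).1 != j) && [forall i, (a, ff).2 i != j])%:R)) /=.
transitivity (\sum_(a < K) expn_p eta delta g q pre a * (a != j)%:R *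
   \sum_(ff : {ffun 'I_b -> 'I_K}) \prod_(i < b) (q pre i (ff i) * (ff i != j)%:R)).
  apply: eq_bigr => a _; rewrite big_distrr /=; apply: eq_bigr => ff _.
  rewrite prod_ind.
  by case: (a != j); case: [forall i, ff i != j]; rewrite /= ?mulr1 ?mulr0 ?mul0r.
rewrite -big_distrl /= sum_neq p_sum1 (sum_ffun (fun i x => q pre i x * (x != j)%:R)); congr (_ * _).
by apply: eq_bigr => i _; rewrite sum_neq Hq1.
Qed.

Lemma sel_sum pre j x :
  \sum_(o : outcome K b) sp pre o * (if selected o j then x else 0)
  = pprime (expn_p eta delta g q pre) (q pre) j * x.
Proof.
transitivity (\sum_(o : outcome K b) (sp pre o * x
   - x * (sp pre o * ((o.1 != j) && [forall i, o.2 i != j])%:R))).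
  apply: eq_bigr => o _.
  have -> : ((o.1 != j) && [forall i, o.2 i != j]) = ~~ selected o j.
    by rewrite /selected negb_or negb_exists.
  by case: (selected o j); rewrite /= ?mulr0 ?subr0 ?mulr1 // mulrC subrr.
rewrite sumrB -big_distrl /= sp_sum1 mul1r -big_distrr /= nsel_sum /pprime.
by ring.
Qed.

Lemma ghat_sum pre j (c d : R) (gt : 'I_K -> R) :
  pprime (expn_p eta delta g q pre) (q pre) j != 0 ->
  \sum_(o : outcome K b) sp pre o *
     (c * ghat gt (expn_p eta delta g q pre) (q pre) o j
      + d * ghat gt (expn_p eta delta g q pre) (q pre) o j ^+ 2)
  = c * gt j + d * gt j ^+ 2 / pprime (expn_p eta delta g q pre) (q pre) j.
Proof.
move=> Hp.
set P := pprime _ _ j.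
transitivity (\sum_(o : outcome K b) sp pre o *
   (if selected o j then c * (gt j / P) + d * (gt j / P) ^+ 2 else 0)).
  apply: eq_bigr => o _; rewrite /ghat.
  by case: (selected o j); rewrite // mulr0 expr0n /= mulr0 addr0.
rewrite sel_sum -/P; field; exact: Hp.
Qed.

Lemma weights_aux_rcons pre w h o j :
  expn_weights_aux eta delta g q pre w (rcons h o) j =
  expn_weights_aux eta delta g q pre w h j *
  expR (delta * ghat (g (size (pre ++ h)))
     (expn_dist eta (expn_weights_aux eta delta g q pre w h)) (q (pre ++ h)) o j).
Proof.
elim: h pre w => [|o' h IH] pre w /=; first by rewrite cats0.
by rewrite IH cat_rcons.
Qed.

Lemma weights_rcons H o j :
  expn_weights eta delta g q (rcons H o) j =
  expn_weights eta delta g q H j *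
  expR (delta * ghat (g (size H)) (expn_p eta delta g q H) (q H) o j).
Proof. by rewrite /expn_weights weights_aux_rcons. Qed.

Definition phiS (j : 'I_K) pre o :=
  delta * ghat (g (size pre)) (expn_p eta delta g q pre) (q pre) o j.

Lemma ln_weights H j : ln (expn_weights eta delta g q H j) = Acc (phiS j) H.
Proof.
elim/last_ind: H => [|H o IH]; first by rewrite /expn_weights /= ln1.
rewrite weights_rcons lnM ?posrE ?weights_gt0 ?expR_gt0 // expRK IH Acc_rcons.
by [].
Qed.

Lemma expR_le2 (x : R) : 0 <= x <= 1/2 -> expR x <= 1 + x + 2 * x ^+ 2.
Proof.
move=> /andP [x0 x1].
have h1 : 1 - x <= expR (- x) by have := expR_ge1Dx (- x).
rewrite expRN in h1.
have hx : 0 < 1 - x by lra.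
have e0 := expR_gt0 x.
have h2 : expR x <= (1 - x)^-1.
  rewrite -(invrK (expR x)) lef_pV2 ?posrE ?invr_gt0 //.
have h3 : (1 - x)^-1 <= 1 + x + 2 * x ^+ 2.
  rewrite -(mulr1 (_^-1)) ler_pdivrMl //.
  have : 0 <= x ^+ 2 * (1 - 2 * x) by apply: mulr_ge0; [exact: sqr_ge0 | lra].
  move=> H; rewrite -subr_ge0; apply: le_trans H _; rewrite le_eqVlt; apply/orP; left; apply/eqP; ring.
exact: le_trans h2 h3.
Qed.


Definition Wt H := \sum_(j < K) expn_weights eta delta g q H j.

Definition phiB pre o := \sum_(j < K) expn_p eta delta g q pre j / (1 - eta) *
  (delta * ghat (g (size pre)) (expn_p eta delta g q pre) (q pre) o j
   + 2 * delta ^+ 2 * ghat (g (size pre)) (expn_p eta delta g q pre) (q pre) o j ^+ 2).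

Lemma w_le_p H j : eta < 1 ->
  expn_weights eta delta g q H j <= Wt H * (expn_p eta delta g q H j / (1 - eta)).
Proof.
move=> e1.
have W0 : 0 < Wt H by apply: sumw_gt0.
have he : 0 < 1 - eta by rewrite subr_gt0.
have h1 : (1 - eta) * (expn_weights eta delta g q H j / Wt H) <= expn_p eta delta g q H j.
  rewrite /expn_p /expn_dist lerDl; apply: divr_ge0; [by case/andP: Heta|exact/ltW/Kpos].
have h2 : expn_weights eta delta g q H j / Wt H <= expn_p eta delta g q H j / (1 - eta).
  by rewrite ler_pdivlMr // mulrC.
rewrite -ler_pdivrMl //; by rewrite mulrC.
Qed.

Lemma stepA H o : eta < 1 ->
  (forall j, 0 <= phiS j H o <= 1/2) ->
  ln (Wt (rcons H o)) <= ln (Wt H) + phiB H o.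
Proof.
move=> e1 Hd.
have W0 : 0 < Wt H by apply: sumw_gt0.
have W1 : 0 < Wt (rcons H o) by apply: sumw_gt0.
have he : 0 < 1 - eta by rewrite subr_gt0.
have s1 : Wt (rcons H o) <= Wt H * (1 + phiB H o).
  rewrite /Wt; under eq_bigr do rewrite weights_rcons.
  rewrite -/(Wt H) mulrDr mulr1 /phiB mulr_sumr -big_split /=.
  apply: ler_sum => j _.
  rewrite -/(phiS j H o).
  have Hx := Hd j.
  have e := expR_le2 Hx.
  have w0 := weights_gt0 H j.
  apply: le_trans (ler_wpM2l (ltW w0) e) _.
  have hw := w_le_p H j e1.
  have hx0 : 0 <= phiS j H o + 2 * phiS j H o ^+ 2.
    by case/andP: Hx => ? ?; apply: addr_ge0 => //; apply: mulr_ge0 => //; exact: sqr_ge0.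
  have : expn_weights eta delta g q H j * (phiS j H o + 2 * phiS j H o ^+ 2)
     <= Wt H * (expn_p eta delta g q H j / (1 - eta)) * (phiS j H o + 2 * phiS j H o ^+ 2).
    exact: ler_wpM2r.
  rewrite /phiS => hh.
  set w := expn_weights _ _ _ _ _ _ in hh *.
  set gh := ghat _ _ _ _ _ in hh *.
  set pj := expn_p _ _ _ _ _ _ in hh *.
  set WW := Wt H in hh *.
  have -> : w * (1 + delta * gh + 2 * (delta * gh) ^+ 2) = w + w * (delta * gh + 2 * (delta * gh) ^+ 2) by ring.
  rewrite lerD2l; apply: le_trans hh _; rewrite le_eqVlt; apply/orP; left; apply/eqP; ring.
have s2 : Wt H * (1 + phiB H o) <= Wt H * expR (phiB H o).
  by apply: ler_wpM2l; [exact: ltW | exact: expR_ge1Dx].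
rewrite -[X in ln (Wt H) + X](expRK (phiB H o)) -lnM ?posrE ?expR_gt0 //.
by rewrite ler_ln ?posrE ?mulr_gt0 ?expR_gt0 //; exact: le_trans s1 s2.
Qed.


Definition phiR (pre : seq (outcome K b)) (o : outcome K b) := g (size pre) o.1.

Lemma CE_phiR H : CE phiR H = \sum_(a < K) expn_p eta delta g q H a * g (size H) a.
Proof. by rewrite /CE /phiR sp_marg. Qed.

Lemma CE_phiS j H : pprime (expn_p eta delta g q H) (q H) j != 0 ->
  CE (phiS j) H = delta * g (size H) j.
Proof.
move=> Hp; rewrite /CE /phiS.
have := @ghat_sum H j delta 0 (g (size H)) Hp.
rewrite !mul0r addr0 => <-; apply: eq_bigr => o _; by rewrite mul0r addr0.
Qed.

Lemma CE_phiB H : (forall j, pprime (expn_p eta delta g q H) (q H) j != 0) ->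
  CE phiB H = \sum_(j < K) expn_p eta delta g q H j / (1 - eta) *
     (delta * g (size H) j + 2 * delta ^+ 2 * g (size H) j ^+ 2
        / pprime (expn_p eta delta g q H) (q H) j).
Proof.
move=> Hp; rewrite /CE /phiB.
under eq_bigr do rewrite big_distrr.
rewrite exchange_big /=; apply: eq_bigr => j _.
rewrite -ghat_sum // big_distrr /=; apply: eq_bigr => o _ /=.
by rewrite mulrCA.
Qed.

Lemma Acc_sub phi1 phi2 H :
  Acc (fun pre o => phi1 pre o - phi2 pre o) H = Acc phi1 H - Acc phi2 H.
Proof.
rewrite /Acc; elim: H [::] => [|o H IH] pre /=; first by rewrite subr0.
by rewrite IH; ring.
Qed.

Lemma CE_sub phi1 phi2 H :
  CE (fun pre o => phi1 pre o - phi2 pre o) H = CE phi1 H - CE phi2 H.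
Proof. by rewrite /CE -sumrB; apply: eq_bigr => o _; rewrite mulrBr. Qed.

Lemma AccAux_phiR o0 pre h :
  AccAux phiR pre h = \sum_(0 <= t < size h) g (size pre + t) (nth o0 h t).1.
Proof.
elim: h pre => [|o h IH] pre /=; first by rewrite big_nil.
rewrite big_nat_recl //= IH /phiR addn0 size_rcons; congr (_ + _).
by apply: eq_bigr => t _; rewrite addSnnS.
Qed.

Lemma Wt_nil : Wt [::] = K%:R.
Proof. by rewrite /Wt /expn_weights /= sumr_const card_ord. Qed.


Definition RR H := \sum_(a < K) expn_p eta delta g q H a * g (size H) a.

Lemma expected_Ex T (o0 : outcome K b) :
  expected_reward eta delta g q T = \sum_(k < T) Ex k [::] RR.
Proof.
rewrite /expected_reward.
rewrite (eq_bigr (fun h : T.-tuple (outcome K b) =>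
   hist_prob_aux eta delta g q [::] h * Acc phiR ([::] ++ h))); last first.
  move=> h _; rewrite /hist_prob /=; congr (_ * _).
  rewrite /Acc (@AccAux_phiR o0) size_tuple big_mkord; apply: eq_bigr => t _.
  by rewrite (tnth_nth o0) add0n.
rewrite tuple_sum_Ex Ex_Acc /Acc /= add0r; apply: eq_bigr => k _.
by apply: Ex_ext => H _; rewrite CE_phiR.
Qed.

Lemma regret_bound (T : nat) (jstar : 'I_K) (Th : R) :
  eta < 1 -> 0 < delta ->
  (forall t j, 0 <= g t j <= 1) ->
  0 <= Th <= 1 ->
  (forall H j, \prod_(i < b) (1 - q H i j) <= Th) ->
  2 * delta <= 1 - Th + Th * (eta / K%:R) ->
  regret eta delta g q T jstar <=
    eta * T%:R + ln K%:R / delta + 2 * delta * (1 - (1 - K%:R^-1) * Th)^-1 * T%:R.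
Proof.
move=> e1 d0 Hg /andP [t0 t1] HTh Hdel.
have [e0 _] := andP Heta.
set B := (1 - (1 - K%:R^-1) * Th)^-1.
have pp H j : 1 - Th + Th * expn_p eta delta g q H j <= pprime (expn_p eta delta g q H) (q H) j.
  rewrite /pprime.
  have h1 : (1 - expn_p eta delta g q H j) * \prod_(i < b) (1 - q H i j)
      <= (1 - expn_p eta delta g q H j) * Th.
    by apply: ler_wpM2l; [rewrite subr_ge0; exact: p_le1 | exact: HTh].
  have -> : 1 - Th + Th * expn_p eta delta g q H j = 1 - (1 - expn_p eta delta g q H j) * Th by ring.
  by rewrite lerD2l lerN2.
have pp2 H j : 2 * delta <= pprime (expn_p eta delta g q H) (q H) j.
  apply: le_trans Hdel _; apply: le_trans (pp H j); rewrite lerD2l.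
  by apply: ler_wpM2l => //; exact: p_ge.
have ppos H j : 0 < pprime (expn_p eta delta g q H) (q H) j.
  by apply: lt_le_trans (pp2 H j); rewrite mulr_gt0.
have pn0 H j : pprime (expn_p eta delta g q H) (q H) j != 0 by rewrite gt_eqF.
have Hd H o j : 0 <= phiS j H o <= 1/2.
  rewrite /phiS /ghat; case: (selected o j); last by rewrite mulr0 lexx /=; lra.
  have [g0 g1] := andP (Hg (size H) j).
  have P0 := ppos H j; have P2 := pp2 H j.
  apply/andP; split.
    by apply: mulr_ge0; [exact: ltW | exact: divr_ge0 (ltW P0)].
  rewrite mulrA ler_pdivrMr //.
  have : delta * g (size H) j <= delta by apply: ler_piMr => //; exact: ltW.
  lra.
have pot H : ln (Wt H) <= ln K%:R + Acc phiB H.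
  elim/last_ind: H => [|H o IH]; first by rewrite Wt_nil /Acc /= addr0.
  apply: le_trans (stepA e1 (Hd H o)) _.
  by rewrite Acc_rcons addrA lerD2r.
have hS H : Acc (phiS jstar) H <= ln (Wt H).
  rewrite -ln_weights ler_ln ?posrE ?weights_gt0 ?sumw_gt0 //.
  rewrite /Wt (bigD1 jstar) //= lerDl; apply: sumr_ge0 => j _; exact/ltW/weights_gt0.
set psi := fun pre o => phiS jstar pre o - phiB pre o.
have hpsi H : Acc psi H <= ln K%:R.
  rewrite /psi Acc_sub; have := hS H; have := pot H; lra.
have E1 : Ex T [::] (Acc psi) <= ln K%:R.
  by rewrite -(Ex_cst T [::] (ln K%:R)); apply: Ex_le => H _; exact: hpsi.
rewrite Ex_Acc /Acc /= add0r in E1.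
set c := 2 * delta ^+ 2 * B / (1 - eta).
have he : 0 < 1 - eta by rewrite subr_gt0.
have CEpsi H : delta * g (size H) jstar - (delta / (1 - eta)) * RR H - c <= CE psi H.
  rewrite /psi CE_sub CE_phiS // CE_phiB //.
  rewrite -addrA lerD2l -opprD lerN2.
  rewrite (eq_bigr (fun j => delta / (1 - eta) * (expn_p eta delta g q H j * g (size H) j)
     + 2 * delta ^+ 2 / (1 - eta) * (expn_p eta delta g q H j * g (size H) j ^+ 2
          / pprime (expn_p eta delta g q H) (q H) j))); last first.
    move=> j _; field; apply/andP; split; [exact: pn0 | exact: lt0r_neq0].
  rewrite big_split /= -!mulr_sumr /RR lerD2l /c.
  have -> : 2 * delta ^+ 2 * B / (1 - eta) = 2 * delta ^+ 2 / (1 - eta) * B by rewrite mulrAC.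
  apply: ler_wpM2l; first by apply: divr_ge0; [apply: mulr_ge0 => //; exact: sqr_ge0 | exact: ltW].
  have Dall : forall j, 0 < 1 - Th + Th * expn_p eta delta g q H j.
    move=> j; have h1 : Th * (eta / K%:R) <= Th * expn_p eta delta g q H j.
      by apply: ler_wpM2l => //; exact: p_ge.
    lra.
  apply: le_trans (sum_ratio HK (ltac:(by rewrite t0 t1) : 0 <= Th <= 1) (p_ge0 H) (p_sum1 H) Dall).
  apply: ler_sum => j _.
  have [g0 g1] := andP (Hg (size H) j).
  have Dj := Dall j.
  rewrite -mulrA; apply: ler_wpM2l; first exact: p_ge0.
  apply: le_trans (_ : g (size H) j ^+ 2 / pprime (expn_p eta delta g q H) (q H) j
      <= 1 / pprime (expn_p eta delta g q H) (q H) j) _.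
    apply: ler_wpM2r; first by rewrite invr_ge0; exact: ltW.
    by rewrite expr_le1.
  by rewrite mul1r lef_pV2 ?posrE.
have sumE k : delta * g k jstar - delta / (1 - eta) * Ex k [::] RR - c <= Ex k [::] (CE psi).
  have -> : delta * g k jstar - delta / (1 - eta) * Ex k [::] RR - c
     = Ex k [::] (fun H => (delta * g k jstar - c) + (- (delta / (1 - eta))) * RR H).
    by rewrite ExD Ex_cst ExZ; ring.
  apply: Ex_le => H /= HH; rewrite add0n in HH; rewrite -HH; have := CEpsi H; lra.
have ER := expected_Ex T (jstar, [ffun => jstar]).
have S : \sum_(k < T) (delta * g k jstar - delta / (1 - eta) * Ex k [::] RR - c) <= ln K%:R.
  by apply: le_trans E1; apply: ler_sum => k _; exact: sumE.
rewrite !sumrB -!mulr_sumr sumr_const card_ord -ER in S.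
rewrite /regret.
set G := \sum_(t < T) g t jstar in S *.
set Gh := expected_reward _ _ _ _ _ in S *.
set L := ln K%:R in S *.
have L0 : 0 <= L by rewrite /L ln_ge0 // ler1n.
have G0 : G <= T%:R.
  have : G <= \sum_(t < T) (1:R) by apply: ler_sum => t _; case/andP: (Hg t jstar).
  by rewrite sumr_const card_ord.
have dd : 0 < delta / (1 - eta) by rewrite divr_gt0.
have S2 : (1 - eta) * G - Gh - 2 * delta * B * T%:R <= L * (1 - eta) / delta.
  rewrite -(ler_pM2r dd).
  have -> : ((1 - eta) * G - Gh - 2 * delta * B * T%:R) * (delta / (1 - eta))
     = delta * G - delta / (1 - eta) * Gh - c * T%:R.
    by rewrite /c; field; rewrite ?(gt_eqF he) ?(gt_eqF d0).
  have -> : L * (1 - eta) / delta * (delta / (1 - eta)) = L.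
    by field; rewrite ?(gt_eqF he) ?(gt_eqF d0).
  apply: le_trans S; rewrite /c le_eqVlt; apply/orP; left; apply/eqP; ring.
have S3 : L * (1 - eta) / delta <= L / delta.
  rewrite ler_pM2r ?invr_gt0 //; rewrite -[X in _ <= X]mulr1; apply: ler_wpM2l => //; lra.
have S4 : eta * G <= eta * T%:R by apply: ler_wpM2l.
lra.
Qed.

End Ex.

Definition dl0 (R : realType) (Th : R) (K T : nat) : R :=
  Num.sqrt (ln K%:R) / Num.sqrt (beta_of K Th * T%:R).

Definition eta_f (R : realType) (Th : R) (K T : nat) : R :=
  let e := 4 * dl0 Th K T * beta_of K Th in
  if (0 <= e) && (e < 1/2) then e else 0.

Definition delta_f (R : realType) (Th : R) (K T : nat) : R :=
  if 0 < dl0 Th K T then dl0 Th K T else 1.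

Lemma Ghat_ge0 (R : realType) K b (eta delta : R) (g : nat -> 'I_K -> R)
  (q : seq (outcome K b) -> 'I_b -> 'I_K -> R) T (o0 : outcome K b) :
  (0 < K)%N -> 0 <= eta <= 1 -> (forall h i j, 0 <= q h i j) ->
  (forall h i, \sum_(j < K) q h i j = 1) ->
  (forall t j, 0 <= g t j <= 1) ->
  0 <= expected_reward eta delta g q T.
Proof.
move=> HK Heta Hq0 Hq1 Hg.
rewrite (@expected_Ex _ _ _ eta delta g q HK Heta Hq0 Hq1 T o0).
apply: sumr_ge0 => k _.
rewrite -(@Ex_cst _ _ _ eta delta g q HK Hq1 k [::] 0).
apply: (@Ex_le _ _ _ eta delta g q HK Heta Hq0) => H _.
apply: sumr_ge0 => a _; apply: mulr_ge0; first exact: p_ge0.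
by case/andP: (Hg (size H) a).
Qed.

Lemma G_le (R : realType) K (g : nat -> 'I_K -> R) T j :
  (forall t j, 0 <= g t j <= 1) -> \sum_(t < T) g t j <= T%:R.
Proof.
move=> Hg.
have : \sum_(t < T) g t j <= \sum_(t < T) (1:R) by apply: ler_sum => t _; case/andP: (Hg t j).
by rewrite sumr_const card_ord.
Qed.

Lemma G_ge0 (R : realType) K (g : nat -> 'I_K -> R) T j :
  (forall t j, 0 <= g t j <= 1) -> 0 <= \sum_(t < T) g t j.
Proof. by move=> Hg; apply: sumr_ge0 => t _; case/andP: (Hg t j). Qed.

Lemma mul3_ge0 (R : realType) (a b c : R) : 0 <= a -> 0 <= b -> 0 <= c -> 0 <= a * b * c.
Proof. by move=> ha hb hc; apply: mulr_ge0 => //; apply: mulr_ge0. Qed.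

Theorem mainTheorem3 (R : realType) :
  exists C : R, 0 < C /\
  exists eta_of delta_of : R -> nat -> nat -> R,
  forall (K T b : nat) (eps : 'I_b -> R)
         (g : nat -> 'I_K -> R) (q : seq (outcome K b) -> 'I_b -> 'I_K -> R),
    (0 < K)%N ->
    (forall i, 0 < eps i <= 1) ->
    (forall t j, 0 <= g t j <= 1) ->
    (forall h i, \sum_(j < K) q h i j = 1) ->
    (forall h i j, eps i / K%:R <= q h i j) ->
    let Theta := Theta_of K eps in
    let beta := beta_of K Theta in
    let eta := eta_of Theta K T in
    let delta := delta_of Theta K T in
    0 <= eta <= 1 /\ 0 < delta /\
    forall jstar : 'I_K,
      (forall j : 'I_K, \sum_(t < T) g t j <= \sum_(t < T) g t jstar) ->
      regret eta delta g q T jstar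
        <= C * Num.sqrt (beta * T%:R * ln K%:R).
Proof.
exists 8; split; first by [].
exists (@eta_f R), (@delta_f R).
move=> K T b eps g q HK Heps Hg Hq1 Hqe Theta beta eta delta.
have Heta : 0 <= eta <= 1.
  rewrite /eta /eta_f; set e := 4 * _ * _.
  by case: ifP => [/andP [e0 e1]|_]; [apply/andP; split => //; lra | rewrite lexx ler01].
have Hdelta : 0 < delta.
  by rewrite /delta /delta_f; case: ifP.
split => //; split => // jstar _.
have Kp : 0 < K%:R :> R by rewrite ltr0n.
have Hq0 : forall h i j, 0 <= q h i j.
  move=> h i j; apply: le_trans (Hqe h i j); apply: divr_ge0; [by case/andP: (Heps i) => /ltW | exact: ltW].
have epsK i : 0 <= 1 - eps i / K%:R <= 1.
  have [e0 e1] := andP (Heps i).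
  have : eps i / K%:R <= 1.
    rewrite ler_pdivrMr // mul1r; apply: le_trans e1 _; by rewrite ler1n.
  have : 0 <= eps i / K%:R by apply: divr_ge0; exact: ltW.
  move=> ? ?; apply/andP; split; lra.
have Th01 : 0 <= Theta <= 1.
  apply/andP; split; first by apply: prodr_ge0 => i _; case/andP: (epsK i).
  by apply: prodr_ile1 => i _; exact: epsK.
have HTh H j : \prod_(i < b) (1 - q H i j) <= Theta.
  apply: ler_prod => i _; apply/andP; split.
    by rewrite subr_ge0; exact: (q_le1 Hq0 Hq1).
  by rewrite lerD2l lerN2.
set L := ln K%:R.
have RHS0 : 0 <= 8 * Num.sqrt (beta * T%:R * L) by rewrite mulr_ge0 ?sqrtr_ge0.
case: (posnP T) => [T0 | Tpos].
  suff -> : regret eta delta g q T jstar = 0 by exact: RHS0.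
  rewrite /regret /expected_reward T0 big_ord0 big1 ?subrr // => h _.
  by rewrite big_ord0 mulr0.
set o0 : outcome K b := (jstar, [ffun => jstar]).
have Gh0 := Ghat_ge0 delta T o0 HK Heta Hq0 Hq1 Hg.
have GT := G_le T jstar Hg.
have G0 := G_ge0 T jstar Hg.
case: (ltnP 1 K) => [K2 | K1].
  have L0 : 0 < L by rewrite /L ln_gt0 // ltr1n.
  set m := 1 - (1 - K%:R^-1) * Theta.
  have Ki : 0 < K%:R^-1 :> R by rewrite invr_gt0.
  have Ki1 : K%:R^-1 <= 1 :> R by rewrite invr_le1 ?unitfE ?gt_eqF // ler1n; lia.
  have [t0 t1] := andP Th01.
  have m0 : 0 < m.
    rewrite /m subr_gt0; apply: (@le_lt_trans _ _ (1 - K%:R^-1)); last by lra.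
    by rewrite -[X in _ <= X]mulr1; apply: ler_wpM2l => //; lra.
  have m1 : m <= 1 by rewrite /m lerBlDr lerDl; apply: mulr_ge0 => //; lra.
  have bm : beta = m^-1 + 1 by [].
  have mi : 1 <= m^-1 by rewrite invr_ge1 ?unitfE ?gt_eqF.
  have b0 : 0 < beta by lra.
  have Tp : 0 < T%:R :> R by rewrite ltr0n.
  have bT : 0 < beta * T%:R by rewrite mulr_gt0.
  set s := Num.sqrt L.
  set u := Num.sqrt (beta * T%:R).
  have s0 : 0 < s by rewrite sqrtr_gt0.
  have u0 : 0 < u by rewrite sqrtr_gt0.
  have s2 : s ^+ 2 = L by rewrite sqr_sqrtr // ltW.
  have u2 : u ^+ 2 = beta * T%:R by rewrite sqr_sqrtr // ltW.
  have -> : Num.sqrt (beta * T%:R * L) = u * s by rewrite sqrtrM // ltW.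
  have dl : dl0 Theta K T = s / u by [].
  have dd : delta = s / u by rewrite /delta /delta_f dl divr_gt0.
  have hA : s / u * (beta * T%:R) = s * u by rewrite -u2; field; rewrite gt_eqF.
  have hB : L / (s / u) = s * u by rewrite -s2; field; rewrite !gt_eqF.
  have su0 : 0 < s * u by rewrite mulr_gt0.
  set e := 4 * (s / u) * beta.
  have d0' : 0 < s / u by rewrite divr_gt0.
  have e0 : 0 <= e by rewrite /e; apply: mul3_ge0 => //; exact: ltW.
  case: (ltP e (1/2)) => He.
    have ee : eta = e by rewrite /eta /eta_f dl -/e e0 He.
    have Hdel : 2 * delta <= 1 - Theta + Theta * (eta / K%:R).
      rewrite ee dd /e.
      set d := s / u.
      have bmm : beta * m = 1 + m by rewrite bm mulrDl mulVf ?gt_eqF // mul1r.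
      have h8 : 8 * d < m.
        have : 8 * d * (beta * m) < m.
          have h1 : 8 * d * beta < 1.
            move: He; rewrite /e -/d => He. have -> : 8 * d * beta = 2 * (4 * d * beta) by ring. lra.
          by rewrite -[X in _ < X]mul1r mulrA ltr_pM2r.
        rewrite bmm; nra.
      have mm : m = (1 - Theta) + Theta * K%:R^-1 by rewrite /m; ring.
      set cc := Theta * K%:R^-1 in mm *.
      have cc0 : 0 <= cc by rewrite /cc mulr_ge0 // ltW.
      have -> : Theta * (4 * d * beta / K%:R) = cc * (4 * d * beta) by rewrite /cc; ring.
      case: (leP cc (1 - Theta)) => Hc.
        have : 0 <= cc * (4 * d * beta) by apply: mulr_ge0 => //; apply: mul3_ge0 => //; exact: ltW.
        lra.
      have : cc * (4 * d * beta) >= 2 * d.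
        have : (m / 2) * (4 * d * beta) <= cc * (4 * d * beta).
          by apply: ler_wpM2r; [apply: mul3_ge0 => //; exact: ltW | lra].
        have -> : (m / 2) * (4 * d * beta) = 2 * d * (beta * m) by field.
        rewrite bmm; have : 0 <= 2 * d * m by apply: mul3_ge0 => //; exact: ltW.
        move=> ? ?; lra.
      lra.
    have e1 : eta < 1 by rewrite ee; lra.
    have Hreg := regret_bound HK Heta Hq0 Hq1 T jstar e1 Hdelta Hg Th01 HTh Hdel.
    rewrite -/m ee dd in Hreg.
    have X1 : e * T%:R = 4 * (s * u) by rewrite /e -hA; ring.
    have X3 : 2 * (s / u) * m^-1 * T%:R <= 2 * (s * u).
      rewrite -hA.
      have -> : 2 * (s / u) * m^-1 * T%:R = (2 * (s / u) * T%:R) * m^-1 by ring.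
      have -> : 2 * (s / u * (beta * T%:R)) = (2 * (s / u) * T%:R) * beta by ring.
      apply: ler_wpM2l; last by lra.
      by apply: mul3_ge0; [ | exact: ltW | exact: ltW].
    rewrite hB in Hreg.
    rewrite ee dd (mulrC u s); lra.
  have X : e * T%:R = 4 * (s * u) by rewrite /e -hA; ring.
  have : T%:R <= 2 * (e * T%:R) by nra.
  rewrite /regret; lra.
suff -> : regret eta delta g q T jstar = 0 by exact: RHS0.
have aj : forall a : 'I_K, a = jstar.
  move=> a; apply/val_inj => /=; have := ltn_ord a; have := ltn_ord jstar; lia.
rewrite /regret (@expected_Ex _ _ _ eta delta g q HK Heta Hq0 Hq1 T o0).
rewrite /RR; apply/eqP; rewrite subr_eq0; apply/eqP; apply: eq_bigr => k _.
rewrite -(@Ex_cst _ _ _ eta delta g q HK Hq1 k [::] (g k jstar)).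
apply: (@Ex_ext _ _ _ eta delta g q HK Heta Hq0) => H /= ->.
rewrite add0n (eq_bigr (fun a => expn_p eta delta g q H a * g k jstar)); last by move=> a _; rewrite -(aj a).
by rewrite -mulr_suml p_sum1 // mul1r.
Qed.
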